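(* Let $M\in\mathbb{R}^{d\times d}$ satisfy $\|M\|\le1$. Then for every $u\in\mathbb{C}^d$ with $\|u\|\le1$ and every integer $n\ge1$, $$\|M^nu\|^2-\|M^{n+1}u\|^2\le\frac{\operatorname{rank}(M)}{n}\le\frac dn.$$
   Context: $\|\cdot\|$ denotes the Euclidean norm for vectors and the spectral norm for matrices. *)

(* Defs.v *)
(* Real scalars: an arbitrary real closed field R (e.g. the reals);
   complex scalars: complex R = R[i] from mathcomp-real-closed. *)
From HB Require Import structures.
From mathcomp Require Import all_boot all_order all_algebra.
From mathcomp Require Import complex.
Set Implicit Arguments. Unset Strict Implicit. Unset Printing Implicit Defensive.
Import Order.TTheory GRing.Theory Num.Theory.
Local Open Scope ring_scope.

Definition rvnorm (R : rcfType) (d : nat) (x : 'cV[R]_d) : R :=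
  Num.sqrt (\sum_(i < d) x i 0 ^+ 2).

Definition cvnorm (R : rcfType) (d : nat) (u : 'cV[complex R]_d) : R :=
  Num.sqrt (\sum_(i < d) (complex.Re (u i 0) ^+ 2 + complex.Im (u i 0) ^+ 2)).

(* ||M|| <= 1 for the spectral (Euclidean operator) norm of a real matrix:
   ||M x|| <= ||x|| for all x. *)
Definition spec_norm_le1 (R : rcfType) (d : nat) (M : 'M[R]_d) : Prop :=
  forall x : 'cV[R]_d, rvnorm (M *m x) <= rvnorm x.

Definition cplx_mx (R : rcfType) (d : nat) (M : 'M[R]_d) : 'M[complex R]_d :=
  map_mx (fun r : R => r%:C%C) M.

(* Main.v *)
Require Import Defs.
From HB Require Import structures.
From mathcomp Require Import all_boot all_order all_algebra.
From mathcomp Require Import complex ring lra.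
Import Order.TTheory GRing.Theory Num.Theory.
Set Implicit Arguments. Unset Strict Implicit. Unset Printing Implicit Defensive.
Local Open Scope ring_scope.

Definition sq (R : rcfType) d (v : 'cV[R]_d) : R := \sum_(i < d) v i 0 ^+ 2.
Definition form (R : rcfType) d (A : 'M[R]_d) (a b : 'cV[R]_d) : R :=
  (a^T *m A *m b) 0 0.

Lemma trE (R : Type) m n (A : 'M[R]_(m, n)) i j : A^T i j = A j i.
Proof. by rewrite mxE. Qed.

Lemma form_sym (R : rcfType) d (A : 'M[R]_d) a b : A^T = A -> form A b a = form A a b.
Proof.
move=> hA; rewrite /form.
have -> : a^T *m A *m b = (b^T *m A *m a)^T.
  by rewrite !trmx_mul trmxK hA mulmxA.
by rewrite trE.
Qed.

Lemma form_expand (R : rcfType) d (A : 'M[R]_d) a b x y : A^T = A ->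
  form A (x *: a + y *: b) (x *: a + y *: b) =
  x ^+ 2 * form A a a + 2 * x * y * form A a b + y ^+ 2 * form A b b.
Proof.
move=> hA; have := form_sym a b hA; rewrite /form => hs.
rewrite mulmxDr -!scalemxAr [(_ + _)^T]linearD /= !linearZ /= (mulmxDl (x *: a^T)) -!scalemxAl !mulmxDl -!scalemxAl.
set P := a^T *m A *m a; set Q := a^T *m A *m b; set S := b^T *m A *m a; set T := b^T *m A *m b.
rewrite !mxE in hs *; rewrite hs; ring.
Qed.

Lemma form1 (R : rcfType) d (a : 'cV[R]_d) : form 1%:M a a = sq a.
Proof. by rewrite /form mulmx1 mxE; apply: eq_bigr => i _; rewrite mxE expr2. Qed.

Lemma sq_ge0 (R : rcfType) d (a : 'cV[R]_d) : 0 <= sq a.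
Proof. by apply: sumr_ge0 => i _; apply: sqr_ge0. Qed.

Lemma sq_eq0 (R : rcfType) d (a : 'cV[R]_d) : sq a = 0 -> a = 0.
Proof.
move=> /eqP; rewrite psumr_eq0; last by move=> i _; apply: sqr_ge0.
move=> /allP h; apply/matrixP => i j; rewrite ord1 mxE.
by have /implyP := h i (mem_index_enum _); rewrite sqrf_eq0 => /(_ isT)/eqP.
Qed.

Lemma form1_ge0 (R : rcfType) d (w : 'cV[R]_d) : 0 <= form 1%:M w w.
Proof. by rewrite form1 sq_ge0. Qed.

Lemma psd_cs (R : rcfType) d (A : 'M[R]_d) a b : A^T = A ->
  (forall v, 0 <= form A v v) -> form A a b ^+ 2 <= form A a a * form A b b.
Proof.
move=> hA hP.
have Q : forall x y, 0 <= x ^+ 2 * form A a a + 2 * x * y * form A a b + y ^+ 2 * form A b b.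
  by move=> x y; have := hP (x *: a + y *: b); rewrite (form_expand _ _ _ _ hA).
have ha := hP a; have hb := hP b.
move: Q ha hb; set p := form A a a; set q := form A a b; set r := form A b b => Q ha hb.
have [r0|rpos] := eqVneq r 0.
  have [q0|qn0] := eqVneq q 0; first by rewrite q0 r0 expr0n mulr0.
  have := Q (q ^+ 2) (- q * (p + 1)); rewrite r0 => H.
  have q2 : 0 < q ^+ 2 by rewrite lt_neqAle sqr_ge0 andbT eq_sym sqrf_eq0.
  exfalso. have : 0 < q ^+ 4 by rewrite (_ : 4 = 2 * 2)%N // exprM exprn_gt0.
  move=> q4.
  have E : (q ^+ 2) ^+ 2 * p + 2 * q ^+ 2 * (- q * (p + 1)) * q + (- q * (p + 1)) ^+ 2 * 0
     = - (q ^+ 4 * (p + 2)) by ring.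
  rewrite E oppr_ge0 in H.
  have : 0 < q ^+ 4 * (p + 2).
    by rewrite mulr_gt0 //; apply: lt_le_trans (ler_wpDl ha (lexx 2)); rewrite ltr0n.
  by rewrite ltNge H.
have rp : 0 < r by rewrite lt_neqAle eq_sym rpos hb.
have := Q r (- q).
have -> : r ^+ 2 * p + 2 * r * - q * q + (- q) ^+ 2 * r = r * (p * r - q ^+ 2) by ring.
by rewrite pmulr_rge0 // subr_ge0.
Qed.

Lemma form_delta (R : rcfType) d (A : 'M[R]_d) i (v : 'cV[R]_d) :
  form A (delta_mx i 0) v = (A *m v) i 0.
Proof. by rewrite /form trmx_delta -rowE -row_mul mxE. Qed.

Lemma form_diag (R : rcfType) d (A : 'M[R]_d) i :
  form A (delta_mx i 0) (delta_mx i 0) = A i i.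
Proof. by rewrite form_delta -colE mxE. Qed.

Lemma tr_ge0 (R : rcfType) d (A : 'M[R]_d) :
  (forall v, 0 <= form A v v) -> 0 <= \tr A.
Proof. by move=> hP; apply: sumr_ge0 => i _; rewrite -form_diag. Qed.

Lemma form_trace (R : rcfType) d (A : 'M[R]_d) v : A^T = A ->
  (forall v, 0 <= form A v v) -> form A v v <= sq v * \tr A.
Proof.
move=> hA hP.
have h1 : form 1%:M v (A *m v) = form A v v by rewrite /form mulmx1 mulmxA.
have cs := @psd_cs R d 1%:M v (A *m v) (trmx1 _ _) (@form1_ge0 R d).
rewrite !form1 h1 in cs.
have hw : sq (A *m v) <= form A v v * \tr A.
  rewrite /sq /mxtrace mulr_sumr; apply: ler_sum => i _.
  rewrite -form_delta -form_diag mulrC; exact: psd_cs.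
have s0 := hP v; have t0 := tr_ge0 hP; have v0 := sq_ge0 v.
move: cs hw s0 t0 v0; set s := form A v v; set w := sq (A *m v).
set t := \tr A; set q := sq v => cs hw s0 t0 v0.
have [->|sn] := eqVneq s 0; first by rewrite mulr_ge0.
have sp : 0 < s by rewrite lt_neqAle eq_sym sn.
rewrite -(ler_pM2l sp) -expr2; apply: le_trans cs _.
by rewrite mulrCA; apply: ler_wpM2l.
Qed.

Lemma cplx_mxX (R : rcfType) d (M : 'M[R]_d) k : cplx_mx M ^+ k = cplx_mx (M ^+ k).
Proof.
elim: k => [|k IH]; first by rewrite !expr0 /cplx_mx map_mx1.
by rewrite !exprS IH -!mulmxE /cplx_mx map_mxM.
Qed.

Lemma ReD (R : rcfType) (x y : R[i]) : complex.Re (x + y) = complex.Re x + complex.Re y.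
Proof. by case: x; case: y. Qed.
Lemma ImD (R : rcfType) (x y : R[i]) : complex.Im (x + y) = complex.Im x + complex.Im y.
Proof. by case: x; case: y. Qed.
Lemma ReM (R : rcfType) (r : R) (z : R[i]) : complex.Re (r%:C%C * z) = r * complex.Re z.
Proof. case: z => a b /=. ring. Qed.
Lemma ImM (R : rcfType) (r : R) (z : R[i]) : complex.Im (r%:C%C * z) = r * complex.Im z.
Proof. case: z => a b /=. ring. Qed.

Lemma Re_cmul (R : rcfType) d (N : 'M[R]_d) (u : 'cV[R[i]]_d) i :
  complex.Re ((cplx_mx N *m u) i 0) = (N *m map_mx (@complex.Re R) u) i 0.
Proof.
rewrite !mxE (big_morph _ (@ReD R) (erefl : complex.Re (0 : R[i]) = 0)).
by apply: eq_bigr => j _; rewrite !mxE ReM.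
Qed.
Lemma Im_cmul (R : rcfType) d (N : 'M[R]_d) (u : 'cV[R[i]]_d) i :
  complex.Im ((cplx_mx N *m u) i 0) = (N *m map_mx (@complex.Im R) u) i 0.
Proof.
rewrite !mxE (big_morph _ (@ImD R) (erefl : complex.Im (0 : R[i]) = 0)).
by apply: eq_bigr => j _; rewrite !mxE ImM.
Qed.

Lemma form_conj (R : rcfType) d k (N : 'M[R]_(d, k)) (B : 'M[R]_d) v w :
  form (N^T *m B *m N) v w = form B (N *m v) (N *m w).
Proof. by rewrite /form trmx_mul !mulmxA. Qed.

Lemma trace_conj (R : rcfType) d (N B : 'M[R]_d) :
  \tr (N^T *m B *m N) = \sum_i form B (col i N) (col i N).
Proof.
rewrite /mxtrace; apply: eq_bigr => i _.
by rewrite colE -form_conj form_diag.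
Qed.

Lemma subE (R : rcfType) m n (P Q : 'M[R]_(m, n)) i j : (P - Q) i j = P i j - Q i j.
Proof. by rewrite !mxE. Qed.

Lemma form_sub (R : rcfType) d (B C : 'M[R]_d) v w :
  form (B - C) v w = form B v w - form C v w.
Proof. by rewrite /form mulmxBr mulmxBl subE. Qed.

Lemma sq_MT (R : rcfType) d (M : 'M[R]_d) :
  (forall x, sq (M *m x) <= sq x) -> forall x, sq (M^T *m x) <= sq x.
Proof.
move=> hM2 x; set y := M^T *m x.
have e : sq y = form 1%:M x (M *m y).
  by rewrite -form1 /form !mulmx1 /y trmx_mul trmxK !mulmxA.
have cs := @psd_cs R d 1%:M x (M *m y) (trmx1 _ _) (@form1_ge0 R d).
rewrite !form1 -e in cs.
have h2 := hM2 y; have y0 := sq_ge0 y; have x0 := sq_ge0 x.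
have [->|sn] := eqVneq (sq y) 0; first by [].
have sp : 0 < sq y by rewrite lt_neqAle eq_sym sn.
rewrite -(ler_pM2l sp) -expr2; apply: le_trans cs _.
by rewrite mulrC; apply: ler_wpM2r.
Qed.

Lemma trMM_rank (R : rcfType) d (M : 'M[R]_d) :
  (forall x, sq (M *m x) <= sq x) -> \tr (M^T *m M) <= (\rank M)%:R.
Proof.
move=> hM2; have hMT := sq_MT hM2.
set B := col_base M; set G0 := B^T *m B.
have fB : row_free B^T by rewrite /row_free mxrank_tr; exact: col_base_full.
have hbase : B *m row_base M = M := mulmx_base M.
clearbody B.
have uG : G0 \in unitmx.
  rewrite -row_free_unit -kermx_eq0; apply/eqP/row_matrixP => i; rewrite row0.
  set v := row i (kermx G0).
  have hv : v *m G0 = 0 by apply/sub_kermxP; rewrite row_sub.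
  have hz : B *m v^T = 0.
    apply: sq_eq0; rewrite -form1 -form_conj /form trmxK mulmx1 -/G0.
    by rewrite hv mul0mx mxE.
  have : v *m B^T = 0 *m B^T by rewrite mul0mx -[v *m B^T]trmxK trmx_mul trmxK hz trmx0.
  exact: row_free_inj.
set P := B *m invmx G0 *m B^T.
have PB : P *m B = B by rewrite /P -!mulmxA mulVmx // mulmx1.
have PM : P *m M = M by rewrite -hbase mulmxA PB.
have G0T : G0^T = G0 by rewrite /G0 trmx_mul trmxK.
have PT : P^T = P by rewrite /P !trmx_mul trmxK trmx_inv G0T mulmxA.
have PP : P *m P = P by rewrite {1}/P !mulmxA PB.
have trP : \tr P = (\rank M)%:R.
  by rewrite /P mxtrace_mulC mulmxA -/G0 mulmxV // mxtrace1.
have e1 : M *m M^T = P^T *m (M *m M^T) *m P.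
  by rewrite PT -{1}PM -{2}PM trmx_mul PT !mulmxA.
have eR : (\rank M)%:R = \sum_i form 1%:M (col i P) (col i P).
  by rewrite -trace_conj mulmx1 PT PP trP.
have eMM : M *m M^T = (M^T)^T *m 1%:M *m M^T by rewrite mulmx1 trmxK.
rewrite mxtrace_mulC e1 trace_conj eR; apply: ler_sum => i _.
rewrite form1 eMM form_conj form1; exact: hMT.
Qed.

Definition Gf (R : rcfType) d (M : 'M[R]_d) j := \tr ((M ^+ j)^T *m M ^+ j).

Lemma powM (R : rcfType) d (M : 'M[R]_d) k : M ^+ k.+1 = M *m M ^+ k.
Proof. by rewrite exprS mulmxE. Qed.

Lemma sq_Mk (R : rcfType) d (M : 'M[R]_d) :
  (forall x, sq (M *m x) <= sq x) -> forall k x, sq (M ^+ k *m x) <= sq x.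
Proof.
move=> hM2; elim=> [|k IH] x; first by rewrite expr0 mul1mx.
by rewrite powM -mulmxA; apply: le_trans (hM2 _) (IH x).
Qed.

Lemma key (R : rcfType) d (M : 'M[R]_d) :
  (forall x, sq (M *m x) <= sq x) -> forall j k x,
  0 <= Gf M j - Gf M j.+1 /\
  sq (M ^+ (j + k) *m x) - sq (M ^+ (j + k).+1 *m x) <= sq x * (Gf M j - Gf M j.+1).
Proof.
move=> hM2 j k x.
set N := M ^+ j; set P := 1%:M - M^T *m M; set A := N^T *m P *m N.
have fA : forall v, form A v v = sq (N *m v) - sq (M *m (N *m v)).
  move=> v; rewrite /A form_conj /P form_sub form1.
  have -> : M^T *m M = M^T *m 1%:M *m M by rewrite mulmx1.
  by rewrite form_conj form1.
have sA : A^T = A.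
  by rewrite /A /P !trmx_mul trmxK linearB /= trmx1 trmx_mul trmxK mulmxA.
have pA : forall v, 0 <= form A v v by move=> v; rewrite fA subr_ge0.
have tA : \tr A = Gf M j - Gf M j.+1.
  rewrite /A /P /Gf powM -/N mulmxBr mulmxBl mulmx1 raddfB /=.
  by rewrite trmx_mul !mulmxA.
split; first by rewrite -tA; exact: tr_ge0.
set w := M ^+ k *m x.
have e1 : M ^+ (j + k) *m x = N *m w by rewrite exprD /w mulmxA.
rewrite powM -mulmxA e1 -fA -tA.
apply: le_trans (form_trace w sA pA) _.
apply: ler_wpM2r; first exact: tr_ge0.
exact: sq_Mk.
Qed.

Lemma Gf_ge0 (R : rcfType) d (M : 'M[R]_d) j : 0 <= Gf M j.
Proof.
apply: tr_ge0 => v.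
have -> : (M ^+ j)^T *m M ^+ j = (M ^+ j)^T *m 1%:M *m M ^+ j by rewrite mulmx1.
by rewrite form_conj form1 sq_ge0.
Qed.

Unset Implicit Arguments.
Theorem mainTheorem15 (R : rcfType) (d : nat) (M : 'M[R]_d)
  (hM : spec_norm_le1 M) (u : 'cV[complex R]_d) (hu : cvnorm u <= 1)
  (n : nat) (hn : (1 <= n)%N) :
  cvnorm ((cplx_mx M ^+ n) *m u) ^+ 2 - cvnorm ((cplx_mx M ^+ n.+1) *m u) ^+ 2
    <= (\rank M)%:R / n%:R
  /\ (\rank M)%:R / n%:R <= d%:R / n%:R :> R.
Proof.
have hM2 : forall x, sq (M *m x) <= sq x.
  by move=> x; have := hM x; rewrite /rvnorm ler_sqrt // sq_ge0.
set ur := map_mx (@complex.Re R) u; set ui := map_mx (@complex.Im R) u.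
have hcv : forall k, cvnorm (cplx_mx M ^+ k *m u) ^+ 2 = sq (M ^+ k *m ur) + sq (M ^+ k *m ui).
  move=> k; rewrite /cvnorm sqr_sqrtr; last first.
    by apply: sumr_ge0 => i _; rewrite addr_ge0 // sqr_ge0.
  rewrite /sq -big_split; apply: eq_bigr => i _.
  by rewrite cplx_mxX Re_cmul Im_cmul.
have hu2 : sq ur + sq ui <= 1.
  move: hu; rewrite /cvnorm -[X in _ <= X]sqrtr1 ler_sqrt // => hu.
  rewrite /sq -big_split /ur /ui; apply: le_trans hu; rewrite le_eqVlt; apply/orP; left; apply/eqP.
  by apply: eq_bigr => i _; rewrite !mxE.
have npos : 0 < n%:R :> R by rewrite ltr0n.
split; last first.
  by rewrite ler_pM2r ?invr_gt0 // ler_nat rank_leq_col.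
rewrite !hcv.
set D := _ - _.
have hD : forall j, (1 <= j <= n)%N -> D <= Gf M j - Gf M j.+1.
  move=> j /andP [j1 jn].
  have [g0 k1] := key hM2 j (n - j) ur.
  have [_ k2] := key hM2 j (n - j) ui.
  rewrite subnKC // in k1 k2.
  have : D <= (sq ur + sq ui) * (Gf M j - Gf M j.+1).
    by rewrite /D mulrDl; lra.
  move=> h; apply: le_trans h _.
  by rewrite ler_piMl // addr_ge0 // sq_ge0.
have hsum : D *+ n <= Gf M 1 - Gf M n.+1.
  have := @ler_sum_nat R 1 n.+1 (fun _ => D) (fun j => Gf M j - Gf M j.+1).
  rewrite sumr_const_nat subn1 /=.
  have -> : \sum_(1 <= i < n.+1) (Gf M i - Gf M i.+1) = Gf M 1 - Gf M n.+1.
    rewrite -opprB -telescope_sumr // -sumrN; apply: eq_bigr => i _; by rewrite opprB.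
  apply => j /andP [j1 jn]; by apply: hD; rewrite j1 -ltnS jn.
have hG : Gf M 1 <= (\rank M)%:R by rewrite /Gf expr1; exact: trMM_rank.
rewrite ler_pdivlMr // mulr_natr.
have := Gf_ge0 M n.+1; lra.
Qed.
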